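(* Let $C\subset\mathbb{P}^2$ be the Klein quartic and let $p_1\in C\setminus\{e_1,e_2,e_3\}$. Set $p_i=\varphi^{i-1}(p_1)$ for $i=1,\dots,7$, and suppose that the lines $\overline{p_1p_3}$ and $\overline{p_5p_7}$ meet in a point of $C$. If the lines \[L_1=\overline{p_6p_1},\ L_2=\overline{p_7p_2},\ L_3=\overline{p_1p_3},\ L_4=\overline{p_2p_4},\ L_5=\overline{p_3p_5},\ L_6=\overline{p_4p_6},\ L_7=\overline{p_5p_7}\] form a heptagon, then its adjoint quartic is $C$.
   Context: Work over $\mathbb{C}$. The Klein quartic is $C=\{x^3y+y^3z+z^3x=0\}\subset\mathbb{P}^2$. Let $e_1=[1:0:0]$, $e_2=[0:1:0]$, $e_3=[0:0:1]$. Let $\zeta$ be a primitive seventh root of unity and $\varphi\colon[x:y:z]\mapsto[\zeta^4x:\zeta^2y:\zeta z]$, an automorphism of $C$ of order $7$. $\overline{pq}$ denotes the line through $p$ and $q$. A heptagon is an ordered $7$-tuple of distinct lines in $\mathbb{P}^2$ with no three concurrent; its adjoint is the unique plane quartic through the $14$ points $L_i\cap L_j$ with $i,j$ non-consecutive modulo $7$. *)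

(* Defs.v *)
From HB Require Import structures.
From mathcomp Require Import all_boot all_order all_algebra.
From mathcomp Require Import reals.
From mathcomp.real_closed Require Import complex.
From mathcomp Require Import mpoly.
Set Implicit Arguments. Unset Strict Implicit. Unset Printing Implicit Defensive.
Import Order.TTheory GRing.Theory Num.Theory.
Local Open Scope ring_scope.

(* Points of P^2 and lines of P^2 are represented by (nonzero) homogeneous
   coordinate vectors in K^3; a line with coordinates l is {x | l.x = 0}. *)
Section Proj.
Variable K : fieldType.
Definition pvec := 'rV[K]_3.

Definition c0 (v : pvec) := v ord0 0%R.
Definition c1 (v : pvec) := v ord0 1%R.
Definition c2 (v : pvec) := v ord0 2%R.

Definition cross (u v : pvec) : pvec :=
  \row_(k < 3) (if k == 0 :> nat then c1 u * c2 v - c2 u * c1 v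
                else if k == 1 :> nat then c2 u * c0 v - c0 u * c2 v
                else c0 u * c1 v - c1 u * c0 v).

(* two nonzero vectors represent the same projective point *)
Definition proj_eq (u v : pvec) : Prop := cross u v = 0.

(* the line through two points p, q (a genuine line iff p, q are distinct
   points of P^2) *)
Definition line_through (p q : pvec) : pvec := cross p q.

Definition meet (l m : pvec) : pvec := cross l m.

Definition on_line (p l : pvec) : Prop := c0 p * c0 l + c1 p * c1 l + c2 p * c2 l = 0.

Definition peval (F : {mpoly K[3]}) (v : pvec) : K := F.@[fun i => v ord0 i].

Definition on_curve (F : {mpoly K[3]}) (v : pvec) : Prop := v != 0 /\ peval F v = 0.

Definition klein : {mpoly K[3]} :=
  'X_0 ^+ 3 * 'X_1 + 'X_1 ^+ 3 * 'X_2 + 'X_2 ^+ 3 * 'X_0.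

Definition e1 : pvec := \row_(k < 3) (if k == 0 :> nat then 1 else 0).
Definition e2 : pvec := \row_(k < 3) (if k == 1 :> nat then 1 else 0).
Definition e3 : pvec := \row_(k < 3) (if k == 2 :> nat then 1 else 0).

Definition phi (zeta : K) (v : pvec) : pvec :=
  \row_(k < 3) (if k == 0 :> nat then zeta ^+ 4 * c0 v
                else if k == 1 :> nat then zeta ^+ 2 * c1 v
                else zeta * c2 v).

(* Heptagon: ordered 7-tuple of distinct lines, no three concurrent *)
Definition heptagon (L : 'I_7 -> pvec) : Prop :=
  (forall i, L i != 0) /\
  (forall i j, i != j -> cross (L i) (L j) != 0) /\
  (forall i j k, i != j -> j != k -> i != k ->
     \det (col_mx (L i) (col_mx (L j) (L k))) != 0).

Definition nonconsec (i j : 'I_7) : bool :=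
  [&& i != j, (i + 1) %% 7 != j & (j + 1) %% 7 != i]%N.

(* F is the adjoint of the heptagon L: the unique plane quartic through the
   14 points L_i \cap L_j with i, j non-consecutive mod 7.  "Unique plane
   quartic" is rendered as: F is a nonzero homogeneous quartic vanishing at
   these points, and every homogeneous quartic vanishing at these points is
   a scalar multiple of F. *)
Definition is_adjoint (L : 'I_7 -> pvec) (F : {mpoly K[3]}) : Prop :=
  [/\ F \is 4.-homog, F != 0,
      (forall i j, nonconsec i j -> peval F (meet (L i) (L j)) = 0) &
      (forall G : {mpoly K[3]}, G \is 4.-homog ->
         (forall i j, nonconsec i j -> peval G (meet (L i) (L j)) = 0) ->
         exists c : K, G = c *: F)].

(* the points p_i = phi^(i-1)(p_1), indexed here by 'I_7 as p_(i+1) *)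
Definition orbit_pts (zeta : K) (p1 : pvec) (i : 'I_7) : pvec := iter i (phi zeta) p1.

(* the heptagon of the statement: L_1 = p6p1, L_2 = p7p2, L_3 = p1p3,
   L_4 = p2p4, L_5 = p3p5, L_6 = p4p6, L_7 = p5p7 (indexed by 'I_7 with
   L_(k+1) at index k), i.e. L_k = line(p_{k-2}, p_k) with indices mod 7. *)
Definition hept_lines (zeta : K) (p1 : pvec) (k : 'I_7) : pvec :=
  line_through (orbit_pts zeta p1 (inZp (k + 5)%N)) (orbit_pts zeta p1 k).
End Proj.

(* Main.v *)
Require Import Defs.
From HB Require Import structures.
From mathcomp Require Import all_boot all_order all_algebra.
From mathcomp Require Import reals.
From mathcomp.real_closed Require Import complex.
From mathcomp Require Import mpoly.
From mathcomp Require Import ring lra zify.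
Import Order.TTheory GRing.Theory Num.Theory.
Local Open Scope ring_scope.
Set Implicit Arguments. Unset Strict Implicit. Unset Printing Implicit Defensive.

Section Vec.
Variable K : fieldType.
Implicit Types u v w a b l m : pvec K.

Definition dot u v := c0 u * c0 v + c1 u * c1 v + c2 u * c2 v.
Definition det3 u v w := dot u (cross v w).

Lemma vec3P u v : c0 u = c0 v -> c1 u = c1 v -> c2 u = c2 v -> u = v.
Proof.
move=> h0 h1 h2; apply/rowP => k.
case: k => [[|[|[|//]]] Hk].
- by move: h0; rewrite /c0; congr (_ = _); congr (_ _ _); apply/val_inj.
- by move: h1; rewrite /c1; congr (_ = _); congr (_ _ _); apply/val_inj.
- by move: h2; rewrite /c2; congr (_ = _); congr (_ _ _); apply/val_inj.
Qed.

Lemma c0_cross u v : c0 (cross u v) = c1 u * c2 v - c2 u * c1 v.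
Proof. by rewrite /c0 /cross mxE. Qed.
Lemma c1_cross u v : c1 (cross u v) = c2 u * c0 v - c0 u * c2 v.
Proof. by rewrite /c1 /cross mxE. Qed.
Lemma c2_cross u v : c2 (cross u v) = c0 u * c1 v - c1 u * c0 v.
Proof. by rewrite /c2 /cross mxE. Qed.
Lemma c0Z (c : K) u : c0 (c *: u) = c * c0 u. Proof. by rewrite /c0 mxE. Qed.
Lemma c1Z (c : K) u : c1 (c *: u) = c * c1 u. Proof. by rewrite /c1 mxE. Qed.
Lemma c2Z (c : K) u : c2 (c *: u) = c * c2 u. Proof. by rewrite /c2 mxE. Qed.
Lemma c0D u v : c0 (u + v) = c0 u + c0 v. Proof. by rewrite /c0 mxE. Qed.
Lemma c1D u v : c1 (u + v) = c1 u + c1 v. Proof. by rewrite /c1 mxE. Qed.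
Lemma c2D u v : c2 (u + v) = c2 u + c2 v. Proof. by rewrite /c2 mxE. Qed.
Lemma c0N u : c0 (- u) = - c0 u. Proof. by rewrite /c0 mxE. Qed.
Lemma c1N u : c1 (- u) = - c1 u. Proof. by rewrite /c1 mxE. Qed.
Lemma c2N u : c2 (- u) = - c2 u. Proof. by rewrite /c2 mxE. Qed.
Lemma c00 : c0 (0 : pvec K) = 0. Proof. by rewrite /c0 mxE. Qed.
Lemma c10 : c1 (0 : pvec K) = 0. Proof. by rewrite /c1 mxE. Qed.
Lemma c20 : c2 (0 : pvec K) = 0. Proof. by rewrite /c2 mxE. Qed.

Definition compE := (c0_cross, c1_cross, c2_cross, c0Z, c1Z, c2Z,
  c0D, c1D, c2D, c0N, c1N, c2N, c00, c10, c20).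

Lemma vec0P u : u = 0 <-> [/\ c0 u = 0, c1 u = 0 & c2 u = 0].
Proof.
split=> [->|[h0 h1 h2]]; first by rewrite !compE.
by apply: vec3P; rewrite !compE.
Qed.

Lemma vec_neq0 u : u != 0 -> [\/ c0 u != 0, c1 u != 0 | c2 u != 0].
Proof.
move=> nz; case: (eqVneq (c0 u) 0) => [h0|]; last by constructor 1.
case: (eqVneq (c1 u) 0) => [h1|]; last by constructor 2.
case: (eqVneq (c2 u) 0) => [h2|]; last by constructor 3.
by move: nz; rewrite (proj2 (vec0P u) (And3 h0 h1 h2)) eqxx.
Qed.

Lemma cross_cross_shared a b c : cross (cross a b) (cross b c) = det3 a b c *: b.
Proof. by apply: vec3P; rewrite /det3 /dot !compE; ring. Qed.
Lemma cross_cross_first a b c : cross (cross a b) (cross a c) = det3 a b c *: a.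
Proof. by apply: vec3P; rewrite /det3 /dot !compE; ring. Qed.
Lemma cross_triple q l m : cross q (cross l m) = dot q m *: l - dot q l *: m.
Proof. by apply: vec3P; rewrite /dot !compE; ring. Qed.
Lemma crossC u v : cross u v = - cross v u.
Proof. by apply: vec3P; rewrite !compE; ring. Qed.
Lemma dot_cross_l l m : dot (cross l m) l = 0.
Proof. by rewrite /dot !compE; ring. Qed.
Lemma dot_cross_r l m : dot (cross l m) m = 0.
Proof. by rewrite /dot !compE; ring. Qed.
Lemma dot_cross3 l m n : dot (cross l m) n = det3 n l m.
Proof. by rewrite /det3 /dot !compE; ring. Qed.
End Vec.

Section Rep.
Variable K : fieldType.

Lemma prod3 (F : 'I_3 -> K) : \prod_(i < 3) F i = F 0 * F 1 * F 2.
Proof.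
rewrite !big_ord_recr big_ord0 /= mul1r.
by congr (F _ * F _ * F _); apply/val_inj.
Qed.

Lemma sum3 (F : 'I_3 -> nat) : (\sum_(i < 3) F i = F 0%R + F 1%R + F 2%R)%N.
Proof.
rewrite !big_ord_recr big_ord0 /=.
by congr (F _ + F _ + F _)%N; apply/val_inj.
Qed.

Definition mk (a b : nat) : 'X_{1..3} :=
  [multinom (nth 0%N [:: a; b; (4 - a - b)%N] k) | k < 3].

Lemma mk0 a b : mk a b 0 = a. Proof. by rewrite mnmE. Qed.
Lemma mk1 a b : mk a b 1 = b. Proof. by rewrite mnmE. Qed.
Lemma mk2 a b : mk a b 2 = (4 - a - b)%N. Proof. by rewrite mnmE. Qed.

Lemma mdeg_mk a b : (a + b <= 4)%N -> mdeg (mk a b) = 4%N.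
Proof. by move=> h; rewrite mdegE sum3 mk0 mk1 mk2; lia. Qed.

Lemma mk_eq (m : 'X_{1..3}) : mdeg m = 4%N -> mk (m 0%R) (m 1%R) = m.
Proof.
rewrite mdegE sum3 => h; apply/mnmP => k; rewrite mnmE.
have e : forall (i j : 'I_3), val i = val j -> m i = m j by move=> i j /val_inj ->.
case: k => [[|[|[|//]]] Hk] /=.
- exact: e.
- exact: e.
- rewrite (e (Ordinal Hk) 2%R) //; lia.
Qed.

Definition cf (Q : {mpoly K[3]}) (i j : nat) := Q@_(mk i j).

Lemma Q_rep (Q : {mpoly K[3]}) : Q \is 4.-homog ->
  Q = \sum_(i < 5) \sum_(j < 5 | (i + j <= 4)%N) cf Q i j *: 'X_[mk i j].
Proof.
move=> hQ; apply/mpolyP => m.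
have -> : (\sum_(i < 5) \sum_(j < 5 | (i + j <= 4)%N) cf Q i j *: 'X_[mk i j])@_m =
   (\sum_(i < 5) \sum_(j < 5 | (i + j <= 4)%N) cf Q i j * (mk i j == m)%:R).
  rewrite raddf_sum; apply: eq_bigr => i _; rewrite raddf_sum; apply: eq_bigr => j _.
  by rewrite /= mcoeffZ mcoeffX.
case: (eqVneq (mdeg m) 4%N) => hm.
- have hs := hm; rewrite mdegE sum3 in hs.
  have h0 : (m 0%R < 5)%N by lia.
  have h1 : (m 1%R < 5)%N by lia.
  rewrite (bigD1 (Ordinal h0)) //=.
  rewrite (bigD1 (Ordinal h1)) /=; last by lia.
  rewrite mk_eq // eqxx mulr1 /cf mk_eq //.
  rewrite [X in _ + X]big1 ?addr0; last first.
    move=> i hi; rewrite big1 // => j hj.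
    case: (eqVneq (mk i j) m) => e; last by rewrite mulr0.
    move/negP: hi; case; apply/eqP/val_inj; by rewrite /= -e mk0.
  rewrite big1 ?addr0 //.
  move=> j /andP [hj hne]; case: (eqVneq (mk (m 0%R) j) m) => e; last by rewrite mulr0.
  move/negP: hne; case; apply/eqP/val_inj; by rewrite /= -e mk1.
- rewrite (dhomog_nemf_coeff hQ hm) big1 // => i _; rewrite big1 // => j hj.
  case: (eqVneq (mk i j) m) => e; last by rewrite mulr0.
  by move: hm; rewrite -e mdeg_mk ?eqxx.
Qed.

Definition Esum (c : nat -> nat -> K) (v : pvec K) :=
  \sum_(i < 5) \sum_(j < 5 | (i + j <= 4)%N)
     c i j * (c0 v ^+ i * c1 v ^+ j * c2 v ^+ (4 - i - j)).

Lemma peval_rep (Q : {mpoly K[3]}) v : Q \is 4.-homog -> peval Q v = Esum (cf Q) v.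
Proof.
move=> hQ; rewrite /peval {1}(Q_rep hQ) /Esum raddf_sum; apply: eq_bigr => i _.
rewrite raddf_sum; apply: eq_bigr => j _.
by rewrite /= mevalZ mevalX prod3 mk0 mk1 mk2.
Qed.
End Rep.

Section Restr.
Variable K : fieldType.
Implicit Types (Q : {mpoly K[3]}) (u v a b : pvec K).

Lemma hom4 Q (c : K) v : Q \is 4.-homog -> peval Q (c *: v) = c ^+ 4 * peval Q v.
Proof.
move=> hQ; rewrite !peval_rep // /Esum big_distrr; apply: eq_bigr => i _.
rewrite big_distrr; apply: eq_bigr => j hj; rewrite !compE.
have e : (4 = i + j + (4 - i - j))%N by lia.
rewrite [in c ^+ 4]e !exprD !exprMn /=; ring.
Qed.

Definition lp (x y : K) : {poly K} := x%:P + 'X * y%:P.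

Lemma lp_horner x y t : (lp x y).[t] = x + t * y.
Proof. by rewrite /lp !hornerE. Qed.

Lemma size_lp x y : (size (lp x y) <= 2)%N.
Proof.
rewrite /lp; apply: leq_trans (size_polyD _ _) _; rewrite geq_max.
apply/andP; split; first by rewrite size_polyC; case: (_ != 0).
apply: leq_trans (size_polyMleq _ _) _; rewrite size_polyX size_polyC.
by case: (_ != 0).
Qed.

Lemma lp_coef1 x y : (lp x y)`_1 = y.
Proof. by rewrite /lp coefD coefC coefXM coefC /= add0r. Qed.

Lemma size_mul_le (p q : {poly K}) m n :
  (size p <= m.+1)%N -> (size q <= n.+1)%N -> (size (p * q)%R <= (m + n).+1)%N.
Proof.
move=> hp hq; apply: leq_trans (size_polyMleq _ _) _.
case: (size p) hp => [|sp] hp; first by rewrite add0n; apply: leq_trans (leq_pred _) _; lia.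
rewrite addSn /= -addnS; exact: leq_add hp hq.
Qed.

Lemma coef_top (p q : {poly K}) m n :
  (size p <= m.+1)%N -> (size q <= n.+1)%N -> (p * q)`_(m + n) = p`_m * q`_n.
Proof.
move=> hp hq; rewrite coefM.
have hm : (m < (m + n).+1)%N by lia.
rewrite (bigD1 (Ordinal hm)) //= big1 ?addr0; first by rewrite addKn.
move=> j hj; have hjm : (nat_of_ord j != m).
  by apply/eqP => e; move/eqP: hj; apply; apply/val_inj.
case: (ltngtP j m) => h.
- rewrite [q`__]nth_default ?mulr0 //; apply: leq_trans hq _; clear -h; lia.
- rewrite nth_default ?mul0r //; apply: leq_trans hp _; clear -h; lia.
- by move/eqP: hjm.
Qed.

Lemma lp_exp x y k : (size (lp x y ^+ k)%R <= k.+1)%N /\ (lp x y ^+ k)`_k = y ^+ k.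
Proof.
elim: k => [|k [IHs IHc]]; first by rewrite !expr0 size_poly1 coefC.
have hs := size_lp x y.
rewrite exprS; split; first exact: (@size_mul_le _ _ 1 k).
by have := @coef_top _ _ 1 k hs IHs; rewrite add1n => ->; rewrite lp_coef1 IHc exprS.
Qed.

Definition rterm (a b : pvec K) (i j : nat) : {poly K} :=
  lp (c0 a) (c0 b) ^+ i * lp (c1 a) (c1 b) ^+ j * lp (c2 a) (c2 b) ^+ (4 - i - j).

Lemma rterm_size a b i j : (i + j <= 4)%N -> (size (rterm a b i j) <= 5)%N.
Proof.
move=> h; have e : (5 = (i + j + (4 - i - j)).+1)%N by lia.
rewrite e; apply: size_mul_le; last by case: (lp_exp (c2 a) (c2 b) (4 - i - j)).
by apply: size_mul_le; [case: (lp_exp (c0 a) (c0 b) i)|case: (lp_exp (c1 a) (c1 b) j)].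
Qed.

Lemma rterm_top a b i j : (i + j <= 4)%N ->
  (rterm a b i j)`_4 = c0 b ^+ i * c1 b ^+ j * c2 b ^+ (4 - i - j).
Proof.
move=> h; have e : (4 = (i + j + (4 - i - j)))%N by lia.
rewrite {1}e /rterm coef_top; last by case: (lp_exp (c2 a) (c2 b) (4 - i - j)).
  rewrite coef_top; last by case: (lp_exp (c1 a) (c1 b) j).
    by rewrite (proj2 (lp_exp _ _ _)) (proj2 (lp_exp _ _ _)) (proj2 (lp_exp _ _ _)).
  by case: (lp_exp (c0 a) (c0 b) i).
by apply: size_mul_le; [case: (lp_exp (c0 a) (c0 b) i)|case: (lp_exp (c1 a) (c1 b) j)].
Qed.

Definition rpoly Q a b : {poly K} :=
  \sum_(i < 5) \sum_(j < 5 | (i + j <= 4)%N) cf Q i j *: rterm a b i j.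

Lemma rpoly_horner Q a b t : Q \is 4.-homog ->
  (rpoly Q a b).[t] = peval Q (a + t *: b).
Proof.
move=> hQ; rewrite peval_rep // /Esum /rpoly horner_sum; apply: eq_bigr => i _.
rewrite horner_sum; apply: eq_bigr => j _.
by rewrite hornerZ /rterm !hornerM !horner_exp !lp_horner !compE.
Qed.

Lemma rpoly_size Q a b : (size (rpoly Q a b) <= 5)%N.
Proof.
rewrite /rpoly; apply: (big_ind (fun p : {poly K} => size p <= 5)%N).
- by rewrite size_poly0.
- by move=> p q hp hq; apply: leq_trans (size_polyD _ _) _; rewrite geq_max hp.
move=> i _; apply: (big_ind (fun p : {poly K} => size p <= 5)%N).
- by rewrite size_poly0.
- by move=> p q hp hq; apply: leq_trans (size_polyD _ _) _; rewrite geq_max hp.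
move=> j hj; apply: leq_trans (size_scale_leq _ _) _; exact: rterm_size.
Qed.

Lemma rpoly_top Q a b : Q \is 4.-homog -> (rpoly Q a b)`_4 = peval Q b.
Proof.
move=> hQ; rewrite peval_rep // /Esum /rpoly coef_sum; apply: eq_bigr => i _.
rewrite coef_sum; apply: eq_bigr => j hj.
by rewrite coefZ rterm_top.
Qed.

Lemma size_le_top (p : {poly K}) n : (size p <= n.+1)%N -> p`_n = 0 -> (size p <= n)%N.
Proof.
move=> hs hc; apply/leq_sizeP => k hk.
case: (ltngtP k n) => h; first by clear -h hk; lia.
- by rewrite nth_default //; apply: leq_trans hs _; clear -h; lia.
- by rewrite h.
Qed.
End Restr.

Section Zero.
Variable K : numFieldType.
Implicit Types (Q : {mpoly K[3]}) (u v a b l : pvec K).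

Definition mkv (x y z : K) : pvec K :=
  \row_(k < 3) (if k == 0 :> nat then x else if k == 1 :> nat then y else z).
Lemma c0_mkv x y z : c0 (mkv x y z) = x. Proof. by rewrite /c0 mxE. Qed.
Lemma c1_mkv x y z : c1 (mkv x y z) = y. Proof. by rewrite /c1 mxE. Qed.
Lemma c2_mkv x y z : c2 (mkv x y z) = z. Proof. by rewrite /c2 mxE. Qed.

Lemma poly_roots (p : {poly K}) n : (size p <= n)%N ->
  (forall k, (k < n)%N -> p.[k%:R] = 0) -> p = 0.
Proof.
move=> hs hr; apply: (@roots_geq_poly_eq0 _ p [seq k%:R | k <- iota 0 n]).
- by apply/allP => x /mapP [k]; rewrite mem_iota add0n => /andP [_ hk] ->; rewrite /root hr.
- by rewrite map_inj_uniq ?iota_uniq // => x y /eqP; rewrite eqr_nat => /eqP.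
- by rewrite size_map size_iota.
Qed.

Lemma poly_roots5 (p : {poly K}) : (size p <= 5)%N -> (forall x, p.[x] = 0) -> p = 0.
Proof. by move=> hs hr; apply: (poly_roots hs) => k _; apply: hr. Qed.

Lemma homog_zero Q : Q \is 4.-homog -> (forall v, peval Q v = 0) -> Q = 0.
Proof.
move=> hQ hv.
have hc : forall i j : 'I_5, (i + j <= 4)%N -> cf Q i j = 0.
  move=> i j hij.
  pose py (y : K) := \poly_(i < 5) (\sum_(j < 5 | (i + j <= 4)%N) cf Q i j * y ^+ j).
  have py0 : forall y, py y = 0.
    move=> y; apply: poly_roots5; first exact: size_poly.
    move=> x; rewrite horner_poly; transitivity (peval Q (mkv x y 1)); last exact: hv.
    rewrite peval_rep // /Esum.
    apply: eq_bigr => i' _; rewrite big_distrl /=; apply: eq_bigr => j' _.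
    by rewrite c0_mkv c1_mkv c2_mkv expr1n mulr1; ring.
  pose qi := \poly_(j < 5) (if (i + j <= 4)%N then cf Q i j else 0).
  have : qi = 0.
    apply: poly_roots5; first exact: size_poly.
    move=> y; rewrite horner_poly.
    transitivity ((py y)`_i); last by rewrite py0 coef0.
    rewrite coef_poly ltn_ord.
    rewrite [RHS]big_mkcond /=; apply: eq_bigr => j0 _; by case: ifP; rewrite ?mul0r.
  move=> hq; transitivity (qi`_j); last by rewrite hq coef0.
  by rewrite coef_poly ltn_ord hij.
rewrite (Q_rep hQ) big1 // => i _; rewrite big1 // => j hj; by rewrite hc // scale0r.
Qed.

Lemma cramer a b e v :
  det3 a b e *: v = det3 v b e *: a + det3 a v e *: b + det3 a b v *: e.
Proof. by apply: vec3P; rewrite /det3 /dot !compE; ring. Qed.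

Lemma cross_cross_l a b l : cross (cross a b) l = dot a l *: b - dot b l *: a.
Proof. by apply: vec3P; rewrite /dot !compE; ring. Qed.

Lemma det_dual a b v l :
  det3 a b v *: l = dot a l *: cross b v + dot b l *: cross v a + dot v l *: cross a b.
Proof. by apply: vec3P; rewrite /det3 /dot !compE; ring. Qed.

Lemma coplanar l a b v : l != 0 -> dot a l = 0 -> dot b l = 0 -> dot v l = 0 ->
  det3 a b v = 0.
Proof.
move=> nz ha hb hv; have := det_dual a b v l.
rewrite ha hb hv !scale0r !addr0 => /eqP; rewrite scaler_eq0 (negbTE nz) orbF.
by move/eqP.
Qed.

Lemma decomp l a b v : l != 0 -> dot a l = 0 -> dot b l = 0 -> dot v l = 0 ->
  cross a b != 0 -> exists al be, v = al *: a + be *: b.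
Proof.
move=> nz ha hb hv nab.
have hd := coplanar nz ha hb hv.
have [e he] : exists e, det3 a b e != 0.
  have hdn : forall e, det3 a b e = dot e (cross a b).
    by move=> e; rewrite /det3 /dot !compE; ring.
  case: (vec_neq0 nab) => h.
  - by exists (mkv 1 0 0); rewrite hdn /dot c0_mkv c1_mkv c2_mkv !mul0r !addr0 mul1r.
  - by exists (mkv 0 1 0); rewrite hdn /dot c0_mkv c1_mkv c2_mkv !mul0r add0r addr0 mul1r.
  - by exists (mkv 0 0 1); rewrite hdn /dot c0_mkv c1_mkv c2_mkv !mul0r !add0r mul1r.
exists ((det3 a b e)^-1 * det3 v b e), ((det3 a b e)^-1 * det3 a v e).
have := cramer a b e v; rewrite hd scale0r addr0 => /(congr1 (fun x => (det3 a b e)^-1 *: x)).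
by rewrite scalerA mulVf // scale1r scalerDr !scalerA.
Qed.
End Zero.

Section Lines.
Variable K : numFieldType.
Implicit Types (Q : {mpoly K[3]}) (u v w a b l A B : pvec K).

Lemma crossZl (c : K) u w : cross (c *: u) w = c *: cross u w.
Proof. by apply: vec3P; rewrite !compE; ring. Qed.
Lemma crossZr (c : K) u w : cross u (c *: w) = c *: cross u w.
Proof. by apply: vec3P; rewrite !compE; ring. Qed.
Lemma cross_self u : cross u u = 0.
Proof. by apply: vec3P; rewrite !compE; ring. Qed.
Lemma cross_linB (x y : K) A B : cross (x *: A + y *: B) B = x *: cross A B.
Proof. by apply: vec3P; rewrite !compE; ring. Qed.
Lemma cross_linA (x : K) A B : cross (A + x *: B) A = x *: cross B A.
Proof. by apply: vec3P; rewrite !compE; ring. Qed.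

Lemma param l A B c : l != 0 -> dot A l = 0 -> dot B l = 0 -> dot c l = 0 ->
  cross A B != 0 -> cross c B != 0 -> exists al t, al != 0 /\ c = al *: (A + t *: B).
Proof.
move=> nz hA hB hc hAB hcB.
have [al [be ec]] := decomp nz hA hB hc hAB; rewrite ec in hcB *.
have nal : al != 0.
  apply: contraNneq hcB => e; by rewrite e scale0r add0r crossZl cross_self scaler0.
exists al, (al^-1 * be); split => //.
by rewrite scalerDr scalerA mulrA mulfV // mul1r.
Qed.

Lemma lineA Q l (a : 'I_5 -> pvec K) : Q \is 4.-homog -> l != 0 ->
  (forall i, dot (a i) l = 0) -> (forall i j, i != j -> cross (a i) (a j) != 0) ->
  (forall i, peval Q (a i) = 0) -> forall v, dot v l = 0 -> peval Q v = 0.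
Proof.
move=> hQ nz hon hcr hz v hv.
pose o0 := @Ordinal 5 0 isT; pose o1 := @Ordinal 5 1 isT; pose o2 := @Ordinal 5 2 isT.
pose o3 := @Ordinal 5 3 isT; pose o4 := @Ordinal 5 4 isT.
set A := a o0; set B := a o1.
have hAB : cross A B != 0 by apply: hcr.
have hP := rpoly_horner A B _ hQ.
have hs4 : (size (rpoly Q A B) <= 4)%N.
  by apply: size_le_top; [exact: rpoly_size | rewrite rpoly_top // hz].
have hparam : forall k, k != o0 -> k != o1 -> exists al t,
    [/\ al != 0, t != 0, a k = al *: (A + t *: B) & peval Q (A + t *: B) = 0].
  move=> k k0 k1.
  have [al [t [nal e]]] := param nz (hon o0) (hon o1) (hon k) hAB (hcr _ _ k1).
  exists al, t; split => //.
  - apply: contraNneq (hcr _ _ k0) => t0.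
    by rewrite e t0 scale0r addr0 crossZl cross_self scaler0.
  - have := hz k; rewrite e hom4 // => /eqP; rewrite mulf_eq0 expf_eq0 (negbTE nal) /=.
    by move/eqP.
have [al2 [t2 [n2 nt2 e2 z2]]] := hparam o2 isT isT.
have [al3 [t3 [n3 nt3 e3 z3]]] := hparam o3 isT isT.
have [al4 [t4 [n4 nt4 e4 z4]]] := hparam o4 isT isT.
have hne : forall i j (ali alj ti tj : K), i != j -> a i = ali *: (A + ti *: B) ->
    a j = alj *: (A + tj *: B) -> ti != tj.
  move=> i j ali alj ti tj ij ei ej; apply: contraNneq (hcr _ _ ij) => et.
  by rewrite ei ej et crossZl crossZr cross_self !scaler0.
have P0 : rpoly Q A B = 0.
  apply: (@roots_geq_poly_eq0 _ _ [:: 0; t2; t3; t4]) => //=.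
  - by rewrite /root !hP scale0r addr0 hz z2 z3 z4 !eqxx.
  - rewrite !inE !negb_or eq_sym nt2 eq_sym nt3 eq_sym nt4 /=.
    by rewrite (hne o2 o3 _ _ _ _ isT e2 e3) (hne o2 o4 _ _ _ _ isT e2 e4) (hne o3 o4 _ _ _ _ isT e3 e4).
have [al [be ev]] := decomp nz (hon o0) (hon o1) hv hAB.
case: (eqVneq al 0) => [al0|nal].
  by rewrite ev al0 scale0r add0r hom4 // hz mulr0.
have -> : v = al *: (A + (al^-1 * be) *: B).
  by rewrite ev scalerDr scalerA mulrA mulfV // mul1r.
by rewrite hom4 // -hP P0 horner0 mulr0.
Qed.

Definition qf u : {poly K} := (c0 u)%:P + 'X * (c1 u)%:P + 'X^2 * (c2 u)%:P.

Lemma qf_horner u x : (qf u).[x] = dot (mkv 1 x (x ^+ 2)) u.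
Proof. by rewrite /qf /dot !hornerE c0_mkv c1_mkv c2_mkv mul1r. Qed.

Lemma qf_neq0 u : u != 0 -> qf u != 0.
Proof.
move=> nz; apply/eqP => h.
have c0e : c0 u = 0.
  have := congr1 (fun p : {poly K} => p`_0) h; rewrite /qf !coefD coefC coefXM coefC coefXnM coef0 /=.
  by rewrite ?addr0 ?add0r.
have c1e : c1 u = 0.
  have := congr1 (fun p : {poly K} => p`_1) h; rewrite /qf !coefD coefC coefXM coefC coefXnM coef0 /= ?coefC /=.
  by rewrite ?addr0 ?add0r.
have c2e : c2 u = 0.
  have := congr1 (fun p : {poly K} => p`_2) h; rewrite /qf !coefD coefC coefXM coefC coefXnM coef0 /= ?coefC /=.
  by rewrite ?addr0 ?add0r.
by move: nz; rewrite (proj2 (vec0P u) (And3 c0e c1e c2e)) eqxx.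
Qed.

Lemma avoid (I : finType) (f : I -> pvec K) : (forall i, f i != 0) ->
  exists w, forall i, dot w (f i) != 0.
Proof.
move=> nz.
set Pr := \prod_(i : I) qf (f i).
have nPr : Pr != 0 by apply/prodf_neq0 => i _; apply: qf_neq0.
case: (boolP (all (root Pr) [seq k%:R | k <- iota 0 (size Pr)])) => [hall|].
  have : Pr = 0.
    apply: (roots_geq_poly_eq0 hall); last by rewrite size_map size_iota.
    by rewrite map_inj_uniq ?iota_uniq // => x y /eqP; rewrite eqr_nat => /eqP.
  by move/eqP; rewrite (negbTE nPr).
case/allPn => x _ hx; exists (mkv 1 x (x ^+ 2)) => i.
move: hx; rewrite /root /Pr horner_prod => /prodf_neq0 /(_ i isT).
by rewrite qf_horner.
Qed.
End Lines.

Section Plane.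
Variable K : numFieldType.
Implicit Types (Q : {mpoly K[3]}) (u v w a b l : pvec K).

Lemma dotDZr u v w (x : K) : dot (u + x *: v) w = dot u w + x * dot v w.
Proof. by rewrite /dot !compE; ring. Qed.
Lemma dot_lin w (x y : K) a b : dot w (x *: a - y *: b) = x * dot w a - y * dot w b.
Proof. by rewrite /dot !compE; ring. Qed.
Lemma cross_g l m (x y : K) : cross l (x *: m - y *: l) = x *: cross l m.
Proof. by apply: vec3P; rewrite !compE; ring. Qed.

Lemma planeB Q (ls : 'I_5 -> pvec K) : Q \is 4.-homog -> (forall i, ls i != 0) ->
  (forall i j, i != j -> cross (ls i) (ls j) != 0) ->
  (forall i v, dot v (ls i) = 0 -> peval Q v = 0) -> forall v, peval Q v = 0.
Proof.
move=> hQ nz hcr hl v.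
case: (pickP (fun i => dot v (ls i) == 0)) => [i /eqP hi|hn]; first exact: hl hi.
have hn' : forall i, dot v (ls i) != 0 by move=> i; rewrite hn.
pose g i j := dot v (ls i) *: ls j - dot v (ls j) *: ls i.
pose f (x : ('I_5 + ('I_5 * 'I_5))%type) :=
  match x with inl i => ls i | inr p => if p.1 == p.2 then ls p.1 else g p.1 p.2 end.
have nf : forall x, f x != 0.
  case=> [i|[i j]] /=; first exact: nz.
  case: ifP => [_|/negbT ij]; first exact: nz.
  apply/eqP => e; have h0 := cross_g (ls i) (ls j) (dot v (ls i)) (dot v (ls j)).
  rewrite -/(g i j) e in h0.
  have : dot v (ls i) *: cross (ls i) (ls j) == 0.
    by rewrite -h0; apply/eqP/vec3P; rewrite !compE; ring.
  by rewrite scaler_eq0 (negbTE (hn' i)) /= (negbTE (hcr i j ij)).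
have [w hw] := avoid nf.
have hwl : forall i, dot w (ls i) != 0 by move=> i; exact: (hw (inl i)).
pose t i := - dot v (ls i) / dot w (ls i).
have ht : forall i, dot v (ls i) = - t i * dot w (ls i).
  by move=> i; rewrite /t mulNr divfK ?opprK.
have tinj : injective t.
  move=> i j e; case: (eqVneq i j) => // ij.
  have := hw (inr (i, j)); rewrite /= (negbTE ij) /g dot_lin.
  rewrite (ht i) (ht j) e => h; exfalso; move/negP: h; apply; apply/eqP; ring.
have P0 : rpoly Q v w = 0.
  apply: (@roots_geq_poly_eq0 _ _ [seq t i | i <- enum 'I_5]).
  - apply/allP => x /mapP [i _ ->]; rewrite /root rpoly_horner //; apply/eqP.
    by apply: (hl i); rewrite dotDZr (ht i); ring.
  - by rewrite map_inj_uniq ?enum_uniq.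
  - by rewrite size_map size_enum_ord rpoly_size.
have := rpoly_horner v w 0 hQ; rewrite P0 horner0 scale0r addr0 => <-.
by [].
Qed.
End Plane.

Lemma col3E (K : fieldType) (a b c : pvec K) :
  col_mx a (col_mx b c) = \matrix_(i < 3, j < 3)
     (if i == 0 :> nat then a ord0 j else if i == 1 :> nat then b ord0 j else c ord0 j).
Proof.
apply/matrixP => i j; rewrite !mxE.
case: splitP => k hk.
  by rewrite hk (ord1 k) /=.
rewrite mxE; case: splitP => k' hk'.
  by rewrite hk hk' (ord1 k') /=.
by rewrite hk hk' (ord1 k') /=.
Qed.

Lemma entry3 (K : fieldType) (v : pvec K) (k : 'I_3) :
  v ord0 k = (if val k == 0 then c0 v else if val k == 1 then c1 v else c2 v).
Proof.
rewrite /c0 /c1 /c2; case: k => [[|[|[|//]]] Hk] /=; congr (v _ _); exact/val_inj.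
Qed.

Lemma det_col3 (K : fieldType) (a b c : pvec K) :
  \det (col_mx a (col_mx b c)) = det3 a b c.
Proof.
rewrite col3E (expand_det_row _ ord0) !big_ord_recr big_ord0 /= add0r.
rewrite /cofactor !(expand_det_row _ ord0) !big_ord_recr !big_ord0 /= !add0r.
rewrite /cofactor !det_mx11 !mxE /= !(entry3 a) !(entry3 b) !(entry3 c) /=.
rewrite /det3 /dot !compE; ring.
Qed.

Lemma inZp_val (a : nat) : val (inZp a : 'I_7) = (a %% 7)%N.
Proof. by []. Qed.

Lemma inZp_neq (a b : nat) : (a %% 7 != b %% 7)%N -> (inZp a : 'I_7) != inZp b.
Proof. by apply: contraNneq => e; rewrite -!inZp_val e. Qed.

Lemma inZp_eq (a b : nat) : (a %% 7 = b %% 7)%N -> (inZp a : 'I_7) = inZp b.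
Proof. by move=> e; apply/val_inj; rewrite /= e. Qed.

Lemma nonconsecE (a b : nat) : nonconsec (inZp a : 'I_7) (inZp b) =
  [&& (a %% 7 != b %% 7)%N, ((a %% 7 + 1) %% 7 != b %% 7)%N & ((b %% 7 + 1) %% 7 != a %% 7)%N].
Proof. by []. Qed.

Goal forall k j : nat, (k < 5)%N -> (j < 4)%N -> nonconsec (inZp k : 'I_7) (inZp (k + 2 + j)).
Proof. move=> k j hk hj; rewrite nonconsecE. apply/and3P; split; apply/eqP; lia. Qed.

Section Uniq.
Variable K : numFieldType.

Lemma uniq7 (Q : {mpoly K[3]}) (L : 'I_7 -> pvec K) : heptagon L -> Q \is 4.-homog ->
  (forall i j, nonconsec i j -> peval Q (meet (L i) (L j)) = 0) ->
  peval Q (meet (L (inZp 0)) (L (inZp 6))) = 0 -> Q = 0.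
Proof.
move=> [hnz [hcr hdet]] hQ hR hs.
pose Ln (n : nat) := L (inZp n).
have hdet3 : forall a b c : nat, (a %% 7 != b %% 7)%N -> (b %% 7 != c %% 7)%N ->
    (a %% 7 != c %% 7)%N -> det3 (Ln a) (Ln b) (Ln c) != 0.
  move=> a b c ab bc ac; rewrite -det_col3; apply: hdet; exact: inZp_neq.
have step : forall k : nat, (k < 5)%N -> peval Q (meet (Ln k) (Ln (k + 6)%N)) = 0 ->
    forall v, dot v (Ln k) = 0 -> peval Q v = 0.
  move=> k hk h6.
  apply: (@lineA _ Q (Ln k) (fun j : 'I_5 => meet (Ln k) (Ln (k + 2 + j)%N)) hQ (hnz (inZp k))).
  - by move=> j; rewrite /meet dot_cross_l.
  - move=> i j ij; rewrite /meet cross_cross_first scaler_eq0 negb_or (hnz (inZp k)) andbT.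
    have hij : (nat_of_ord i != nat_of_ord j) by [].
    have hi := ltn_ord i; have hj := ltn_ord j.
    apply: hdet3; apply/eqP; move: hij => /eqP; lia.
  - move=> j /=; case: (ltnP j 4) => hj.
      by apply: hR; rewrite nonconsecE; apply/and3P; split; apply/eqP; lia.
    have -> : (k + 2 + j = k + 6)%N by have := ltn_ord j; lia.
    exact: h6.
have S0 := step 0%N isT hs.
have next : forall k : nat, (0 < k < 5)%N -> (forall v, dot v (Ln k.-1) = 0 -> peval Q v = 0) ->
    forall v, dot v (Ln k) = 0 -> peval Q v = 0.
  move=> k /andP [k0 k5] hp; apply: step => //; apply: hp.
  have -> : Ln k.-1 = Ln (k + 6)%N by rewrite /Ln (@inZp_eq k.-1 (k + 6)) //; lia.
  by rewrite /meet dot_cross_r.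
have S1 := next 1%N isT S0.
have S2 := next 2%N isT S1.
have S3 := next 3%N isT S2.
have S4 := next 4%N isT S3.
apply: homog_zero => //.
apply: (@planeB _ Q (fun i : 'I_5 => Ln i)) => //.
- by move=> i; apply: hnz.
- move=> i j ij; apply: hcr; apply: inZp_neq.
  have hij : (nat_of_ord i != nat_of_ord j) by [].
  have hi := ltn_ord i; have hj := ltn_ord j.
  apply/eqP; move: hij => /eqP; lia.
- move=> i v; case: i => [[|[|[|[|[|//]]]]] Hi] /=.
  + exact: S0.
  + exact: S1.
  + exact: S2.
  + exact: S3.
  + exact: S4.
Qed.
End Uniq.

Section Klein.
Variable K : numFieldType.
Implicit Types (u v w a b l q M : pvec K).

Lemma peval_klein v :
  peval (klein K) v = c0 v ^+ 3 * c1 v + c1 v ^+ 3 * c2 v + c2 v ^+ 3 * c0 v.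
Proof. rewrite /peval /klein !rmorphD !rmorphM /= !mevalXU /c0 /c1 /c2; ring. Qed.

Lemma klein_homog : klein K \is 4.-homog.
Proof.
have hX : forall i : 'I_3, ('X_i : {mpoly K[3]}) \is 1.-homog.
  by move=> i; rewrite dhomogX; apply/eqP; exact: mdeg1.
rewrite /klein; apply: rpredD; first apply: rpredD.
- by apply: (@dhomogM _ _ _ 3 _ 1) => //; apply: (@dhomogMn _ _ _ 1).
- by apply: (@dhomogM _ _ _ 3 _ 1) => //; apply: (@dhomogMn _ _ _ 1).
- by apply: (@dhomogM _ _ _ 3 _ 1) => //; apply: (@dhomogMn _ _ _ 1).
Qed.

Lemma eq_from (x y z : K) : x - y = z -> z = 0 -> x = y.
Proof. by move=> e h; apply/eqP; rewrite -subr_eq0 e h. Qed.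
Lemma eq_fromN (x y z : K) : x - y = - z -> z = 0 -> x = y.
Proof. by move=> e h; apply/eqP; rewrite -subr_eq0 e h oppr0. Qed.
Ltac fromh h := first [apply: (eq_from _ h); ring | apply: (eq_fromN _ h); ring].

Lemma prop_zero (Q : {mpoly K[3]}) q M : Q \is 4.-homog -> q != 0 -> cross q M = 0 ->
  peval Q q = 0 -> peval Q M = 0.
Proof.
move=> hQ nq hc hq.
have [h0 h1 h2] := proj1 (vec0P _) hc; rewrite !compE in h0 h1 h2.
have key : forall r : K, r != 0 -> forall s, r *: M = s *: q -> peval Q M = 0.
  move=> r nr s e; have := congr1 (peval Q) e; rewrite !hom4 // hq mulr0 => /eqP.
  by rewrite mulf_eq0 expf_eq0 (negbTE nr) /= => /eqP.
case: (vec_neq0 nq) => hr.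
- apply: (key _ hr (c0 M)); apply: vec3P; rewrite !compE.
  + by rewrite mulrC.
  + fromh h2.
  + fromh h1.
- apply: (key _ hr (c1 M)); apply: vec3P; rewrite !compE.
  + fromh h2.
  + by rewrite mulrC.
  + fromh h0.
- apply: (key _ hr (c2 M)); apply: vec3P; rewrite !compE.
  + fromh h1.
  + fromh h0.
  + by rewrite mulrC.
Qed.

Variable zeta : K.
Hypothesis z7 : zeta ^+ 7 = 1.

Lemma c0_phi v : c0 (phi zeta v) = zeta ^+ 4 * c0 v. Proof. by rewrite /c0 /phi mxE. Qed.
Lemma c1_phi v : c1 (phi zeta v) = zeta ^+ 2 * c1 v. Proof. by rewrite /c1 /phi mxE. Qed.
Lemma c2_phi v : c2 (phi zeta v) = zeta * c2 v. Proof. by rewrite /c2 /phi mxE. Qed.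

Definition psi v := mkv (zeta ^+ 3 * c0 v) (zeta ^+ 5 * c1 v) (zeta ^+ 6 * c2 v).

Lemma cross_phi u v : cross (phi zeta u) (phi zeta v) = psi (cross u v).
Proof.
by apply: vec3P; rewrite /psi ?c0_mkv ?c1_mkv ?c2_mkv ?compE ?c0_phi ?c1_phi ?c2_phi; ring.
Qed.

Lemma z7E (x : K) : zeta ^+ 7 * x = x.
Proof. by rewrite z7 mul1r. Qed.

Lemma cross_psi l m : cross (psi l) (psi m) = phi zeta (cross l m).
Proof.
apply: vec3P; rewrite /psi ?compE ?c0_mkv ?c1_mkv ?c2_mkv ?c0_phi ?c1_phi ?c2_phi ?compE.
- rewrite -[zeta ^+ 4 * _]z7E; ring.
- rewrite -[zeta ^+ 2 * _]z7E; ring.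
- rewrite -[zeta * _]z7E; ring.
Qed.

Lemma klein_phi v : peval (klein K) (phi zeta v) = peval (klein K) v.
Proof.
rewrite !peval_klein !c0_phi !c1_phi !c2_phi.
transitivity ((zeta ^+ 7) ^+ 2 * (c0 v ^+ 3 * c1 v) + zeta ^+ 7 * (c1 v ^+ 3 * c2 v)
   + zeta ^+ 7 * (c2 v ^+ 3 * c0 v)); first by ring.
by rewrite z7 expr1n !mul1r.
Qed.

Lemma phi7 v : iter 7 (phi zeta) v = v.
Proof.
apply: vec3P; rewrite /= ?c0_phi ?c1_phi ?c2_phi.
- rewrite -[RHS]mul1r -(expr1n _ 4) -z7; ring.
- rewrite -[RHS]mul1r -(expr1n _ 2) -z7; ring.
- rewrite -[RHS]mul1r -z7; ring.
Qed.

Variable p1 : pvec K.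
Definition Pn (n : nat) := iter n (phi zeta) p1.

Lemma Pn7 n : Pn (n + 7) = Pn n.
Proof. by rewrite /Pn iterD phi7. Qed.

Lemma Pn_mod n : Pn (n %% 7)%N = Pn n.
Proof.
have e : forall (q r : nat), Pn (r + q * 7) = Pn r.
  move=> q r; elim: q => [|q IH]; first by rewrite mul0n addn0.
  by rewrite mulSn (addnC 7) addnA Pn7.
by rewrite {2}(divn_eq n 7) addnC e.
Qed.

Lemma PnS n : Pn n.+1 = phi zeta (Pn n).
Proof. by rewrite /Pn iterS. Qed.

Lemma klein_Pn n : peval (klein K) (Pn n) = peval (klein K) p1.
Proof. by elim: n => [|n IH] //; rewrite PnS klein_phi. Qed.

Definition Ln (n : nat) := cross (Pn (n + 5)) (Pn n).

Lemma hept_Ln n : hept_lines zeta p1 (inZp n) = Ln n.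
Proof.
rewrite /hept_lines /line_through /orbit_pts /Ln -/(Pn _) -/(Pn _) /=.
by rewrite modnDml Pn_mod Pn_mod.
Qed.

Lemma hept_Ln_ord (k : 'I_7) : hept_lines zeta p1 k = Ln k.
Proof.
by rewrite -hept_Ln; congr hept_lines; apply/val_inj; rewrite /= modn_small.
Qed.

Lemma LnS n : Ln n.+1 = psi (Ln n).
Proof. by rewrite /Ln addSn !PnS cross_phi. Qed.

Lemma Ln7 n : Ln (n + 7) = Ln n.
Proof. by rewrite /Ln -addnA (addnC 7) addnA !Pn7. Qed.

Definition Kn (a b : nat) := peval (klein K) (cross (Ln a) (Ln b)).

Lemma KnS (a b : nat) : Kn a.+1 b.+1 = Kn a b.
Proof. by rewrite /Kn !LnS cross_psi klein_phi. Qed.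

Lemma Kn_shift (a b k : nat) : Kn (a + k) (b + k) = Kn a b.
Proof. by elim: k => [|k IH]; rewrite ?addn0 // !addnS KnS. Qed.

Lemma KnC (a b : nat) : Kn a b = Kn b a.
Proof.
rewrite /Kn crossC -scaleN1r hom4 ?klein_homog //.
by rewrite -signr_odd /= expr0 mul1r.
Qed.

Lemma Kn7 (a b : nat) : Kn a (b + 7) = Kn a b.
Proof. by rewrite /Kn Ln7. Qed.

Lemma Kn_mod (a b : nat) : Kn a (b %% 7)%N = Kn a b.
Proof.
have e : forall (q r : nat), Kn a (r + q * 7) = Kn a r.
  move=> q r; elim: q => [|q IH]; first by rewrite mul0n addn0.
  by rewrite mulSn (addnC 7) addnA Kn7.
by rewrite {2}(divn_eq b 7) addnC e.
Qed.

End Klein.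

Section Final.
Variable K : numFieldType.
Variable zeta : K.
Hypothesis z7 : zeta ^+ 7 = 1.
Variable p1 : pvec K.
Hypothesis hp1 : peval (klein K) p1 = 0.

Local Notation Pn := (Pn zeta p1).
Local Notation Ln := (Ln zeta p1).
Local Notation Kn := (Kn zeta p1).

Lemma Kbase02 : Kn 0 2 = 0.
Proof.
rewrite /Kn /Ln.
have -> : Pn (2 + 5) = Pn 0 by rewrite -(Pn7 z7 p1 0).
rewrite cross_cross_shared hom4 ?klein_homog // klein_Pn // hp1 mulr0 //.
Qed.

Lemma orbit_inord (k : nat) : (k < 7)%N -> orbit_pts zeta p1 (inord k) = Pn k.
Proof. by move=> hk; rewrite /orbit_pts inordK. Qed.

Lemma Kbase26 : (exists q : pvec K,
      on_curve (klein K) q /\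
      on_line q (line_through (orbit_pts zeta p1 (inord 0)) (orbit_pts zeta p1 (inord 2))) /\
      on_line q (line_through (orbit_pts zeta p1 (inord 4)) (orbit_pts zeta p1 (inord 6)))) ->
  Kn 2 6 = 0.
Proof.
move=> [q [[nq kq] [h1 h2]]].
rewrite !orbit_inord // /line_through in h1 h2.
rewrite /Kn /Ln.
have -> : Pn (2 + 5) = Pn 0 by rewrite -(Pn7 z7 p1 0).
have -> : Pn (6 + 5) = Pn 4 by rewrite -(Pn7 z7 p1 4).
apply: (@prop_zero K (klein K) q _ (@klein_homog K) nq) => //.
rewrite cross_triple; rewrite /on_line in h1 h2; rewrite /dot h1 h2 !scale0r subrr //.
Qed.

Lemma Kn_red (i j : 'I_7) : Kn i j = Kn 0 ((j + 7 - i) %% 7)%N.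
Proof.
rewrite Kn_mod //.
transitivity (Kn i (j + 7)%N); first by rewrite Kn7.
have hi := ltn_ord i.
transitivity (Kn (0 + i) ((j + 7 - i) + i))%N; last exact: Kn_shift.
by rewrite add0n subnK //; apply: leq_trans (ltnW hi) _; rewrite leq_addl.
Qed.

Lemma hR_all : (exists q : pvec K,
      on_curve (klein K) q /\
      on_line q (line_through (orbit_pts zeta p1 (inord 0)) (orbit_pts zeta p1 (inord 2))) /\
      on_line q (line_through (orbit_pts zeta p1 (inord 4)) (orbit_pts zeta p1 (inord 6)))) ->
  forall i j : 'I_7, nonconsec i j ->
    peval (klein K) (meet (hept_lines zeta p1 i) (hept_lines zeta p1 j)) = 0.
Proof.
move=> hq i j hnc.
rewrite !hept_Ln_ord // /meet -/(Kn _ _) Kn_red.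
have h26 := Kbase26 hq.
move: hnc; rewrite /nonconsec => /and3P [hne h1 h2].
have hne' : (nat_of_ord i != nat_of_ord j) by [].
have hi := ltn_ord i; have hj := ltn_ord j.
have [->|[->|[->|->]]] : ((j + 7 - i) %% 7 = 2 \/ (j + 7 - i) %% 7 = 3 \/
    (j + 7 - i) %% 7 = 4 \/ (j + 7 - i) %% 7 = 5)%N.
  by move: hne' h1 h2 => /eqP hne' /eqP h1 /eqP h2; lia.
- exact: Kbase02.
- have -> : Kn 0 3 = Kn 6 2 by rewrite -(Kn_shift z7 p1 0 3 6) -(Kn7 z7 p1 6 2).
  by rewrite KnC.
- by rewrite -(Kn_shift z7 p1 0 4 2).
- have -> : Kn 0 5 = Kn 2 0 by rewrite -(Kn_shift z7 p1 0 5 2) -(Kn7 z7 p1 2 0).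
  by rewrite KnC Kbase02.
Qed.
End Final.

Lemma pevalBZ (K : fieldType) (a b : K) (P Q : {mpoly K[3]}) v :
  peval (a *: P - b *: Q) v = a * peval P v - b * peval Q v.
Proof. by rewrite /peval mevalB !mevalZ. Qed.

Theorem lemma5p2_gen (K : numFieldType) (zeta : K) (p1 : pvec K) :
  zeta ^+ 7 = 1 ->
  on_curve (klein K) p1 ->
  (exists q : pvec K,
      on_curve (klein K) q /\
      on_line q (line_through (orbit_pts zeta p1 (inord 0)) (orbit_pts zeta p1 (inord 2))) /\
      on_line q (line_through (orbit_pts zeta p1 (inord 4)) (orbit_pts zeta p1 (inord 6)))) ->
  heptagon (hept_lines zeta p1) ->
  is_adjoint (hept_lines zeta p1) (klein K).
Proof.
move=> z7 [p1nz hp1] hq hept.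
have hR := hR_all z7 hp1 hq.
have hK := @klein_homog K.
have knz : klein K != 0.
  apply/eqP => e; have h := peval_klein (mkv (1 : K) 1 0).
  have h1 : c0 (mkv (1 : K) 1 0) ^+ 3 * c1 (mkv (1 : K) 1 0) +
     c1 (mkv (1 : K) 1 0) ^+ 3 * c2 (mkv (1 : K) 1 0) +
     c2 (mkv (1 : K) 1 0) ^+ 3 * c0 (mkv (1 : K) 1 0) = 1.
    by rewrite c0_mkv c1_mkv c2_mkv; ring.
  by move: h; rewrite h1 e /peval rmorph0 => /eqP; rewrite eq_sym oner_eq0.
split; [exact: hK | exact: knz | exact: hR |].
move=> G hG hGR.
set s := meet (hept_lines zeta p1 (inZp 0)) (hept_lines zeta p1 (inZp 6)).
have Fs : peval (klein K) s != 0.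
  apply/eqP => h; move/eqP: knz; apply; exact: (uniq7 hept hK hR h).
set Q := peval (klein K) s *: G - peval G s *: klein K.
have hQ : Q \is 4.-homog by rewrite rpredB // rpredZ.
have Q0 : Q = 0.
  apply: (uniq7 hept hQ).
  - by move=> i j hij; rewrite /Q pevalBZ (hGR i j hij) (hR i j hij) !mulr0 subrr.
  - by rewrite /Q pevalBZ mulrC subrr.
exists (peval G s / peval (klein K) s).
move/eqP: Q0; rewrite /Q subr_eq0 => /eqP e.
rewrite mulrC -scalerA -e scalerA mulVf // scale1r //.
Qed.

Unset Implicit Arguments.

Theorem lemma5p2 (R : realType) (zeta : R[i]) (p1 : pvec R[i]) :
  7.-primitive_root zeta ->
  on_curve (klein R[i]) p1 ->
  ~ proj_eq p1 (e1 R[i]) -> ~ proj_eq p1 (e2 R[i]) -> ~ proj_eq p1 (e3 R[i]) ->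
  (exists q : pvec R[i],
      on_curve (klein R[i]) q /\
      on_line q (line_through (orbit_pts zeta p1 (inord 0)) (orbit_pts zeta p1 (inord 2))) /\
      on_line q (line_through (orbit_pts zeta p1 (inord 4)) (orbit_pts zeta p1 (inord 6)))) ->
  heptagon (hept_lines zeta p1) ->
  is_adjoint (hept_lines zeta p1) (klein R[i]).
Proof.
move=> hz hp _ _ _ hq hh.
exact: (@lemma5p2_gen _ zeta p1 (prim_expr_order hz) hp hq hh).
Qed.
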